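(* Let $(t_i)_{i\in\mathbb{N}}$ be a sequence of real numbers that are algebraically independent over $\mathbb{Q}$, and for distinct $i,j\in\mathbb{N}$ set $P_{i,j} = (t_i + t_j,\ t_i^2 + t_it_j + t_j^2)\in\mathbb{R}^2$ (so $P_{i,j}=P_{j,i}$). Let $i,j,k,\ell,m,n$ be pairwise distinct indices. Then: (a) $P_{i,j}$, $P_{j,k}$, $P_{i,k}$ are collinear; (b) $P_{i,j}$, $P_{i,k}$, $P_{i,\ell}$ are not collinear; (c) $P_{i,j}$, $P_{j,k}$, $P_{k,\ell}$ are not collinear; (d) $P_{i,j}$, $P_{i,k}$, $P_{\ell,m}$ are not collinear; (e) $P_{i,j}$, $P_{k,\ell}$, $P_{m,n}$ are not collinear. *)

(* Defs.v *)
From HB Require Import structures.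
From mathcomp Require Import all_boot all_order all_algebra.
From mathcomp Require Import reals.
From mathcomp Require Import mpoly.
Set Implicit Arguments. Unset Strict Implicit. Unset Printing Implicit Defensive.
Import Order.TTheory GRing.Theory Num.Theory.
Local Open Scope ring_scope.

Definition alg_indep_Q (R : realType) (t : nat -> R) : Prop :=
  forall (n : nat) (f : 'I_n -> nat), injective f ->
  forall p : {mpoly rat[n]}, p != 0 ->
    (map_mpoly (ratr : rat -> R) p).@[fun i => t (f i)] != 0.

Definition Ppt (R : realType) (t : nat -> R) (i j : nat) : R * R :=
  (t i + t j, t i ^+ 2 + t i * t j + t j ^+ 2).

Definition collinear (R : realType) (a b c : R * R) : Prop :=
  (b.1 - a.1) * (c.2 - a.2) - (b.2 - a.2) * (c.1 - a.1) = 0.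

(* Main.v *)
Require Import Defs.
From HB Require Import structures.
From mathcomp Require Import all_boot all_order all_algebra.
From mathcomp Require Import reals.
From mathcomp Require Import mpoly.
From mathcomp Require Import ring lra.
Import Order.TTheory GRing.Theory Num.Theory.
Local Open Scope ring_scope.

Definition pt {T : comRingType} (a b : T) : T * T := (a + b, a ^+ 2 + a * b + b ^+ 2).
Definition cdet {T : comRingType} (x y z : T * T) : T :=
  (y.1 - x.1) * (z.2 - x.2) - (y.2 - x.2) * (z.1 - x.1).

Lemma cdet_morph (T U : comRingType) (phi : {rmorphism T -> U}) a b c d e g :
  phi (cdet (pt a b) (pt c d) (pt e g)) =
  cdet (pt (phi a) (phi b)) (pt (phi c) (phi d)) (pt (phi e) (phi g)).
Proof. by rewrite /cdet /pt /= !(rmorphB, rmorphM, rmorphD, rmorphXn). Qed.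

Lemma neqN (x : rat) N : (0 < N)%N -> x = N%:R -> x != 0.
Proof. by move=> hN ->; rewrite pnatr_eq0 -lt0n. Qed.

Definition o6 (x : nat) (H : (x < 6)%N) : 'I_6 := Ordinal H.

Section S.
Variables (R : realType) (t : nat -> R) (ht : alg_indep_Q t).
Variables (s : seq nat) (hs : uniq s) (hsz : size s = 6%N).

Let f (x : 'I_6) : nat := nth 0%N s x.
Let w (x : 'I_6) : R := t (f x).

Lemma f_inj : injective f.
Proof.
move=> x y; rewrite /f => /eqP; rewrite nth_uniq ?hsz //.
by move/eqP/val_inj.
Qed.

Definition phi : {rmorphism {mpoly rat[6]} -> R} :=
  (meval w \o map_mpoly (ratr : rat -> R))%FUN.

Lemma keyne (a b c d e g : 'I_6) (v : 'I_6 -> rat) :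
  cdet (pt (v a) (v b)) (pt (v c) (v d)) (pt (v e) (v g)) != 0 ->
  cdet (pt (w a) (w b)) (pt (w c) (w d)) (pt (w e) (w g)) != 0.
Proof.
move=> hv.
have hp : cdet (pt 'X_a 'X_b) (pt 'X_c 'X_d) (pt 'X_e 'X_g) != 0 :> {mpoly rat[6]}.
  apply: contraNneq hv => h0.
  have := congr1 (meval v) h0; rewrite meval0.
  by rewrite (@cdet_morph _ _ (meval v)) /= !mevalXU => ->.
have := @ht 6 f f_inj _ hp.
have E : forall x, w x = phi 'X_x.
  by move=> x; rewrite /phi /= map_mpolyX mevalXU.
by move=> H; rewrite !E -(@cdet_morph _ _ phi); exact: H.
Qed.

End S.

Theorem claim2p1 (R : realType) (t : nat -> R) (ht : alg_indep_Q t)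
  (i j k l m n : nat) (hdist : uniq [:: i; j; k; l; m; n]) :
  [/\ collinear (Ppt t i j) (Ppt t j k) (Ppt t i k),
      ~ collinear (Ppt t i j) (Ppt t i k) (Ppt t i l),
      ~ collinear (Ppt t i j) (Ppt t j k) (Ppt t k l),
      ~ collinear (Ppt t i j) (Ppt t i k) (Ppt t l m)
    & ~ collinear (Ppt t i j) (Ppt t k l) (Ppt t m n)].
Proof.
have K a b c d e g := @keyne R t ht _ hdist erefl a b c d e g (fun x : 'I_6 => (x : nat)%:R).
have vE : forall x H, (((@o6 x H) : nat)%:R : rat) = x%:R by [].
rewrite /collinear /Ppt /=.
split.
- ring.
- apply/eqP; move: (K (@o6 0 isT) (@o6 1 isT) (@o6 0 isT) (@o6 2 isT) (@o6 0 isT) (@o6 3 isT)).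
  rewrite /cdet /pt !vE; apply; cbn [fst snd].
  apply: (@neqN _ 2 isT); ring.
- apply/eqP; move: (K (@o6 0 isT) (@o6 1 isT) (@o6 1 isT) (@o6 2 isT) (@o6 2 isT) (@o6 3 isT)).
  rewrite /cdet /pt !vE; apply; cbn [fst snd].
  apply: (@neqN _ 12 isT); ring.
- apply/eqP; move: (K (@o6 0 isT) (@o6 1 isT) (@o6 0 isT) (@o6 2 isT) (@o6 3 isT) (@o6 4 isT)).
  rewrite /cdet /pt !vE; apply; cbn [fst snd].
  apply: (@neqN _ 18 isT); ring.
- apply/eqP; move: (K (@o6 0 isT) (@o6 1 isT) (@o6 2 isT) (@o6 3 isT) (@o6 4 isT) (@o6 5 isT)).
  rewrite /cdet /pt !vE; apply; cbn [fst snd].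
  apply: (@neqN _ 96 isT); ring.
Qed.
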